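(* Let $H\geq 2$ be an integer and $C>0$ a real number, let $A=\{\frac{b}{a}: a,b\in\mathbb{Z},\ 0<a\le H,\ |\frac ba|\le C\}$, and set $\varepsilon:=\frac{1}{H(H-1)}$. Let $f(x)=c_1x^{d_1}+\cdots+c_tx^{d_t}$ with $t\ge1$, integers $0\le d_1<\cdots<d_t$, and $c_1,\dots,c_t\in A\setminus\{0\}$, and let $\beta$ be a real number with $\beta\ge\frac{2C}{\varepsilon}+1$. Write $c_t=\frac{b}{a}$ with $a,b\in\mathbb{Z}$, $a>0$, $\gcd(a,b)=1$. For $i=1,2,\dots,H$ let $$I_i:=\left(\frac{f(\beta)}{\beta^{d_t}}\,i-\frac{\varepsilon}{2}\,i,\ \frac{f(\beta)}{\beta^{d_t}}\,i+\frac{\varepsilon}{2}\,i\right).$$ Then $I_a\cap\mathbb{Z}=\{b\}$, and whenever $a_0\in\{1,\dots,H\}$ and $b_0\in\mathbb{Z}$ satisfy $b_0\in I_{a_0}$, we have $\frac{b_0}{a_0}=\frac{b}{a}$.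
   Context: Here $f(\beta)$ is real since all coefficients are rational and $\beta$ is real. *)

(* Defs.v *)
From Stdlib Require Import Reals Lra Lia ZArith.
Open Scope R_scope.

Definition inA (H : Z) (C : R) (x : R) : Prop :=
  exists a b : Z, (0 < a <= H)%Z /\ x = IZR b / IZR a /\ Rabs x <= C.

(* f(x) = c_1 x^{d_1} + ... + c_t x^{d_t}  (indices 1..t, t >= 1). *)
Definition fpoly (t : nat) (c : nat -> R) (d : nat -> nat) (x : R) : R :=
  sum_f_R0 (fun i => c (S i) * x ^ (d (S i))) (t - 1).

Definition inI (r eps : R) (i : R) (x : R) : Prop :=
  r * i - eps / 2 * i < x < r * i + eps / 2 * i.

(* Main.v *)
Require Import Defs.
From Stdlib Require Import Reals Lra Lia ZArith.
Open Scope R_scope.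

Lemma sum_bound (t : nat) (c : nat -> R) (d : nat -> nat) (C beta : R)
  (hC : 0 < C) (hb : 1 < beta)
  (hd : forall i : nat, (1 <= i)%nat -> (i < t)%nat -> (d i < d (S i))%nat)
  (hc : forall i : nat, (1 <= i)%nat -> (i <= t)%nat -> Rabs (c i) <= C) :
  forall n, (S n <= t)%nat ->
  Rabs (sum_f_R0 (fun i => c (S i) * beta ^ (d (S i))) n) * (beta - 1)
    < C * beta ^ (d (S n) + 1).
Proof.
  induction n as [|n IH]; intros hn.
  - simpl sum_f_R0. rewrite Rabs_mult, (Rabs_pos_eq (beta ^ _)) by (apply pow_le; lra).
    rewrite pow_add, pow_1.
    assert (h1 := hc 1%nat ltac:(lia) hn).
    assert (hp : 0 < beta ^ d 1%nat) by (apply pow_lt; lra).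
    assert (0 <= Rabs (c 1%nat)) by apply Rabs_pos.
    set (P := beta ^ d 1%nat) in *.
    assert (0 <= (C - Rabs (c 1%nat)) * (P * (beta - 1))) by (apply Rmult_le_pos; nra).
    nra.
  - simpl sum_f_R0. fold (sum_f_R0 (fun i => c (S i) * beta ^ (d (S i))) n).
    assert (IH' := IH ltac:(lia)).
    assert (hle : beta ^ (d (S n) + 1) <= beta ^ d (S (S n))).
    { apply Rle_pow; [lra|]. assert (h := hd (S n) ltac:(lia) ltac:(lia)). lia. }
    assert (htr := Rabs_triang (sum_f_R0 (fun i => c (S i) * beta ^ (d (S i))) n)
                     (c (S (S n)) * beta ^ d (S (S n)))).
    rewrite Rabs_mult, (Rabs_pos_eq (beta ^ d (S (S n)))) in htr by (apply pow_le; lra).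
    rewrite pow_add, pow_1.
    assert (h1 := hc (S (S n)) ltac:(lia) hn).
    assert (hp : 0 < beta ^ d (S (S n))) by (apply pow_lt; lra).
    assert (0 <= Rabs (c (S (S n)))) by apply Rabs_pos.
    set (s := sum_f_R0 _ n) in *.
    set (P := beta ^ d (S (S n))) in *.
    assert (0 <= (C - Rabs (c (S (S n)))) * (P * (beta - 1))) by (apply Rmult_le_pos; nra).
    assert (C * beta ^ (d (S n) + 1) <= C * P) by (apply Rmult_le_compat_l; lra).
    assert (Rabs (s + c (S (S n)) * P) * (beta - 1) <= (Rabs s + Rabs (c (S (S n))) * P) * (beta - 1))
      by (apply Rmult_le_compat_r; lra).
    nra.
Qed.

Lemma int_close (x y : Z) : Rabs (IZR x - IZR y) < 1 -> x = y.
Proof.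
  intros h. rewrite <- minus_IZR in h. apply Rabs_def2 in h. destruct h as [h1 h2].
  assert (h2' : IZR (-1) < IZR (x - y)) by (simpl; lra).
  apply lt_IZR in h2'. apply lt_IZR in h1. lia.
Qed.

Theorem lemma2p7 (H : Z) (C : R) (t : nat) (c : nat -> R) (d : nat -> nat)
    (beta : R) (a b : Z)
    (hH : (2 <= H)%Z) (hC : 0 < C) (ht : (1 <= t)%nat)
    (hd : forall i : nat, (1 <= i)%nat -> (i < t)%nat -> (d i < d (S i))%nat)
    (hc : forall i : nat, (1 <= i)%nat -> (i <= t)%nat -> inA H C (c i) /\ c i <> 0)
    (hbeta : beta >= 2 * C / (1 / (IZR H * (IZR H - 1))) + 1)
    (ha : (0 < a)%Z) (hab : Z.gcd a b = 1%Z) (hct : c t = IZR b / IZR a) :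
  let eps := 1 / (IZR H * (IZR H - 1)) in
  let r := fpoly t c d beta / beta ^ (d t) in
  (forall z : Z, inI r eps (IZR a) (IZR z) <-> z = b) /\
  (forall a0 b0 : Z, (1 <= a0 <= H)%Z -> inI r eps (IZR a0) (IZR b0) ->
     IZR b0 / IZR a0 = IZR b / IZR a).
Proof.
  intros eps r.
  assert (hHr : 2 <= IZR H) by (apply IZR_le; lia).
  assert (hX : 0 < IZR H * (IZR H - 1)) by nra.
  assert (hepsX : eps * (IZR H * (IZR H - 1)) = 1) by (unfold eps; field; lra).
  assert (heps : 0 < eps) by (unfold eps; apply Rdiv_lt_0_compat; lra).
  replace (2 * C / (1 / (IZR H * (IZR H - 1)))) with (2 * C * (IZR H * (IZR H - 1)))
    in hbeta by (field; lra).
  assert (hb1 : 1 < beta) by nra.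
  assert (hce : 2 * C <= eps * (beta - 1)) by nra.
  assert (hcA : forall i, (1 <= i)%nat -> (i <= t)%nat -> Rabs (c i) <= C).
  { intros i h1 h2. destruct (hc i h1 h2) as [[a' [b' [_ [_ h]]]] _]. exact h. }
  assert (haH : (a <= H)%Z).
  { destruct (hc t ht (le_n t)) as [[a' [b' [ha' [he _]]]] _].
    rewrite hct in he.
    assert (hIa : IZR a <> 0) by (apply not_0_IZR; lia).
    assert (hIa' : IZR a' <> 0) by (apply not_0_IZR; lia).
    assert (e : IZR (b * a') = IZR (a * b')).
    { rewrite !mult_IZR. field_simplify_eq in he; [lra|auto]. }
    apply eq_IZR in e.
    assert (hdv : (a | b * a')%Z) by (exists b'; lia).
    apply Z.gauss in hdv; [|exact hab].
    apply Z.divide_pos_le in hdv; lia. }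
  assert (key : Rabs (r - IZR b / IZR a) < eps / 2).
  { rewrite <- hct. unfold r, fpoly.
    destruct t as [|m]; [lia|].
    replace (S m - 1)%nat with m by lia.
    assert (hP : 0 < beta ^ d (S m)) by (apply pow_lt; lra).
    destruct m as [|k].
    - simpl sum_f_R0. replace (c 1%nat * beta ^ d 1%nat / beta ^ d 1%nat - c 1%nat) with 0
        by (field; lra). rewrite Rabs_R0. lra.
    - simpl sum_f_R0. fold (sum_f_R0 (fun i => c (S i) * beta ^ (d (S i))) k).
      set (s := sum_f_R0 _ k).
      replace ((s + c (S (S k)) * beta ^ d (S (S k))) / beta ^ d (S (S k)) - c (S (S k)))
        with (s / beta ^ d (S (S k))) by (field; lra).
      assert (hs := sum_bound (S (S k)) c d C beta hC hb1 hd hcA k ltac:(lia)).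
      fold s in hs.
      assert (hle : beta ^ (d (S k) + 1) <= beta ^ d (S (S k))).
      { apply Rle_pow; [lra|]. assert (h := hd (S k) ltac:(lia) ltac:(lia)). lia. }
      unfold Rdiv. rewrite Rabs_mult, Rabs_inv, (Rabs_pos_eq (beta ^ _)) by lra.
      set (P := beta ^ d (S (S k))) in *.
      assert (0 <= Rabs s) by apply Rabs_pos.
      assert (h2 : Rabs s < eps / 2 * P) by nra.
      apply (Rmult_lt_reg_r P); [lra|]. rewrite Rmult_assoc, Rinv_l by lra. lra. }
  assert (hIa : 0 < IZR a) by (apply IZR_lt; lia).
  assert (hHa : IZR a <= IZR H) by (apply IZR_le; lia).
  assert (hrab : Rabs (r * IZR a - IZR b) < eps / 2 * IZR a).
  { replace (r * IZR a - IZR b) with ((r - IZR b / IZR a) * IZR a) by (field; lra).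
    rewrite Rabs_mult, (Rabs_pos_eq (IZR a)) by lra. nra. }
  assert (part1 : forall z : Z, inI r eps (IZR a) (IZR z) <-> z = b).
  { intros z; split.
    - intros [h1 h2]. apply int_close.
      assert (heH : eps * IZR a <= 1) by nra.
      apply Rabs_def2 in hrab. apply Rabs_def1; lra.
    - intros ->. apply Rabs_def2 in hrab. unfold inI. lra. }
  split; [exact part1|].
  intros a0 b0 ha0 hin.
  destruct (Z.eq_dec a0 a) as [-> | hne].
  - apply part1 in hin. now subst.
  - assert (hprod : (a * a0 <= H * (H - 1))%Z).
    { destruct (Z_lt_le_dec a a0); nia. }
    apply IZR_le in hprod. rewrite !mult_IZR, minus_IZR in hprod. simpl (IZR 1) in hprod.
    assert (hIa0 : 0 < IZR a0) by (apply IZR_lt; lia).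
    destruct hin as [h1 h2].
    apply Rabs_def2 in hrab.
    (* |b0 a - b a0| < eps a a0 <= 1 *)
    assert (hk : Rabs (IZR (b0 * a) - IZR (b * a0)) < 1).
    { rewrite !mult_IZR. destruct hrab as [h3 h4].
      assert (e1 : IZR a * (IZR b0 - (r * IZR a0 - eps / 2 * IZR a0)) > 0) by (apply Rmult_gt_0_compat; lra).
      assert (e2 : IZR a * (r * IZR a0 + eps / 2 * IZR a0 - IZR b0) > 0) by (apply Rmult_gt_0_compat; lra).
      assert (e3 : IZR a0 * (eps / 2 * IZR a - (r * IZR a - IZR b)) > 0) by (apply Rmult_gt_0_compat; lra).
      assert (e4 : IZR a0 * ((r * IZR a - IZR b) + eps / 2 * IZR a) > 0) by (apply Rmult_gt_0_compat; lra).
      assert (e5 : eps * (IZR a * IZR a0) <= eps * (IZR H * (IZR H - 1))) by (apply Rmult_le_compat_l; lra).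
      clearbody r eps. apply Rabs_def1.
      - revert e2 e3 e5 hepsX. generalize (IZR a) (IZR a0) (IZR b) (IZR b0) (IZR H). clear. intros. nra.
      - revert e1 e4 e5 hepsX. generalize (IZR a) (IZR a0) (IZR b) (IZR b0) (IZR H). clear. intros. nra. }
    apply int_close in hk.
    apply (f_equal IZR) in hk. rewrite !mult_IZR in hk.
    field_simplify_eq; lra.
Qed.
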